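(* Let $S^+=\{\overline{\jmath}_1,\dots,\overline{\jmath}_\nu\}$ be a set of distinct positive integers, $S=S^+\cup(-S^+)$, $S^c=\mathbb{Z}\setminus(S\cup\{0\})$, $\lambda(j)=j\frac{4+j^2}{1+j^2}$ and $\overline\omega=(\lambda(\overline{\jmath}_1),\dots,\lambda(\overline{\jmath}_\nu))$. There exists a constant $C>0$ depending on the set $S$ such that the following holds: if $j,j'\in S^c$, $j\ne j'$, $\ell\in\mathbb{Z}^\nu$ with $0<|\ell|\le2$ (where $|\ell|=\sum_i|\ell_i|$), $\sum_{i=1}^\nu\overline{\jmath}_i\ell_i+j-j'=0$ and $\delta_{\ell jj'}:=\overline\omega\cdot\ell+\lambda(j)-\lambda(j')\ne0$, then $|\delta_{\ell jj'}|\ge C$. *)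

(* Defs.v *)
From mathcomp Require Import all_boot all_order all_algebra.
From mathcomp Require Import reals.
Set Implicit Arguments. Unset Strict Implicit. Unset Printing Implicit Defensive.
Import Order.TTheory GRing.Theory Num.Theory.
Local Open Scope ring_scope.

Definition lam (R : realType) (j : int) : R :=
  (j%:~R * (4 + j%:~R ^+ 2)) / (1 + j%:~R ^+ 2).

Definition inS (nu : nat) (jb : 'I_nu -> int) (j : int) : bool :=
  [exists i, (j == jb i) || (j == - jb i)].

Definition inSc (nu : nat) (jb : 'I_nu -> int) (j : int) : bool :=
  (j != 0) && ~~ inS jb j.

Definition l1norm (nu : nat) (l : 'I_nu -> int) : int := \sum_i `|l i|.

Definition delta (R : realType) (nu : nat) (jb : 'I_nu -> int)
  (l : 'I_nu -> int) (j j' : int) : R :=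
  \sum_i lam R (jb i) * (l i)%:~R + lam R j - lam R j'.

(* Main.v *)
Require Import Defs.
From mathcomp Require Import all_boot all_order all_algebra.
From mathcomp Require Import reals ring lra zify.
Import Order.TTheory GRing.Theory Num.Theory.
Local Open Scope ring_scope.

Section Aux.
Variable R : realType.

Definition G (x : int) : R := 3 * x%:~R / (1 + x%:~R ^+ 2).

Lemma den_pos (x : int) : 0 < 1 + x%:~R ^+ 2 :> R.
Proof. have := sqr_ge0 (x%:~R : R); lra. Qed.

Lemma lamE (x : int) : lam R x = x%:~R + G x.
Proof.
rewrite /lam /G; have := den_pos x => h.
field; by rewrite gt_eqF.
Qed.

Lemma GD (x : int) : G x * (1 + x%:~R ^+ 2) = 3 * x%:~R.
Proof. rewrite /G; have := den_pos x => h; field; by rewrite gt_eqF. Qed.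

Lemma den_int (x : int) : (1 + x%:~R ^+ 2 : R) \is a Num.int.
Proof. by rewrite rpredD ?rpredX ?int_num1 ?intr_int. Qed.

Lemma GD_int (x : int) : G x * (1 + x%:~R ^+ 2) \is a Num.int.
Proof. by rewrite GD rpredM ?intr_int // (_ : 3 = 3%:~R) ?intr_int. Qed.

Lemma G_pos (x : int) : 0 < x -> 0 < G x.
Proof.
move=> hx; rewrite /G; apply: divr_gt0; last exact: den_pos.
rewrite pmulr_rgt0 //; by rewrite ltr0z.
Qed.

Lemma G_inj (x y : int) : 0 < x -> 0 < y -> G x = G y -> x = y.
Proof.
move=> hx hy E.
have ha : 1 <= (x%:~R : R) by rewrite ler1z.
have hb : 1 <= (y%:~R : R) by rewrite ler1z.
have E2 : (x%:~R : R) * (1 + y%:~R ^+ 2) = y%:~R * (1 + x%:~R ^+ 2).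
  have e1 := GD x; have e2 := GD y. rewrite E in e1.
  have hx' := den_pos x; have hy' := den_pos y.
  have : 3 * (x%:~R : R) * (1 + y%:~R ^+ 2) = 3 * y%:~R * (1 + x%:~R ^+ 2).
    by rewrite -e1 -e2; ring.
  lra.
apply/eqP; rewrite -(eqr_int R); apply/eqP.
set a := (x%:~R : R) in ha E2 *; set b := (y%:~R : R) in hb E2 *.
have F : (a - b) * (1 - a * b) = 0.
  have : a * (1 + b ^+ 2) - b * (1 + a ^+ 2) = 0 by rewrite E2 subrr.
  move=> h; rewrite -h; ring.
move/eqP: F; rewrite mulf_eq0 => /orP[/eqP|/eqP] F; first lra.
nra.
Qed.

Lemma ge0_le_sum (n : nat) (F : 'I_n -> int) (i : 'I_n) :
  (forall k, 0 <= F k) -> F i <= \sum_k F k.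
Proof.
move=> h; rewrite (bigD1 i) //= lerDl; exact: sumr_ge0.
Qed.


Definition A {nu : nat} (jb l : 'I_nu -> int) : R :=
  \sum_i G (jb i) * (l i)%:~R.

Lemma A_int (nu : nat) (jb l : 'I_nu -> int) :
  A jb l * \prod_i (1 + (jb i)%:~R ^+ 2) \is a Num.int.
Proof.
rewrite /A mulr_suml; apply: rpred_sum => i _.
rewrite mulrAC (bigD1 i) //= mulrA.
rewrite rpredM ?intr_int // rpredM ?GD_int //.
by apply: rpred_prod => k _; exact: den_int.
Qed.

Lemma A_pos (nu : nat) (jb l : 'I_nu -> int) :
  (forall i, 0 < jb i) ->
  (forall i, 0 <= l i) -> (exists i, l i != 0) -> 0 < A jb l.
Proof.
move=> hjb hl [i hi]; rewrite /A (bigD1 i) //=.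
have h1 : 0 < G (jb i) * (l i)%:~R.
  by rewrite mulr_gt0 ?G_pos // ltr0z lt_def hi hl.
have h2 : 0 <= \sum_(k | k != i) G (jb k) * (l k)%:~R.
  by apply: sumr_ge0 => k _; rewrite mulr_ge0 ?ler0z // ltW ?G_pos.
lra.
Qed.

Lemma A_nz (nu : nat) (jb l : 'I_nu -> int) :
  (forall i, 0 < jb i) -> injective jb ->
  0 < l1norm l <= 2 -> A jb l != 0.
Proof.
move=> hjb jinj /andP[h0 h2].
have hex : exists i, l i != 0.
  apply/existsP; apply: contraTT h0 => /existsPn H.
  rewrite /l1norm big1 ?ltxx // => i _.
  by have/negPn/eqP-> := H i.
case: (boolP [forall i, 0 <= l i]) => [/forallP hp | ].
  by rewrite gt_eqF // A_pos.
case: (boolP [forall i, l i <= 0]) => [/forallP hn | ].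
  have : 0 < A jb (fun i => - l i).
    apply: A_pos => // [i|]; first by rewrite oppr_ge0.
    by case: hex => i hi; exists i; rewrite oppr_eq0.
  have -> : A jb (fun i => - l i) = - A jb l.
    by rewrite /A -sumrN; apply: eq_bigr => i _; rewrite intrN mulrN.
  by rewrite oppr_gt0 => /lt_eqF ->.
move=> /forallPn [b hb] /forallPn [a ha].
rewrite -ltNge in ha; rewrite -ltNge in hb.
have hab : a != b.
  by apply: contraTneq ha => ->; rewrite -leNgt ltW.
move: h2; rewrite /l1norm (bigD1 a) //= (bigD1 b) /=; last by rewrite eq_sym.
move=> h2.
rewrite (ltr0_norm ha) (gtr0_norm hb) in h2.
have hr : 0 <= \sum_(i | (i != a) && (i != b)) `|l i| by apply: sumr_ge0.
move: hr h2; set s := \sum_(i | _) _ => hr h2.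
have ha1 : l a = -1 by lia.
have hb1 : l b = 1 by lia.
have hr0 : s = 0 by lia.
rewrite /A (bigD1 a) //= (bigD1 b) /=; last by rewrite eq_sym.
rewrite big1; last first.
  move=> i hi; have := psumr_eq0P (fun k _ => normr_ge0 (l k)) hr0 hi.
  by move/eqP; rewrite normr_eq0 => /eqP ->; rewrite mulr0.
rewrite ha1 hb1; apply/eqP => E.
have E' : G (jb a) = G (jb b).
  move: E; rewrite addr0 (_ : (-1 : int)%:~R = -1 :> R) // (_ : (1 : int)%:~R = 1 :> R) //.
  lra.
by move/eqP: hab; apply; apply: jinj; apply: G_inj.
Qed.

Lemma Gbound (x : int) (P : R) : 0 < P -> 12 * P <= `|x%:~R| -> 4 * P * `|G x| <= 1.
Proof.
move=> hP hx.
have e := GD x.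
have hd := den_pos x.
set a := (x%:~R : R) in hx e hd *.
have e2 : `|G x| * (1 + a ^+ 2) = 3 * `|a|.
  by rewrite -(gtr0_norm hd) -normrM e normrM (gtr0_norm (_ : (0:R) < 3)).
have sq : a ^+ 2 = `|a| ^+ 2 by rewrite real_normK ?num_real.
have hg : 0 <= `|G x| by [].
rewrite sq in e2 hd.
have : 4 * P * `|G x| * (1 + `|a| ^+ 2) <= 1 * (1 + `|a| ^+ 2).
  rewrite -mulrA e2; nra.
by rewrite ler_pM2r.
Qed.

Lemma sq_le (x K : R) : `|x| <= K -> x ^+ 2 <= K ^+ 2.
Proof. rewrite -real_normK ?num_real; have := normr_ge0 x; nra. Qed.

Lemma DD_le (a b K : R) : 0 <= a -> 0 <= b -> a <= K ^+ 2 -> b <= K ^+ 2 ->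
  (1 + a) * (1 + b) <= (1 + K ^+ 2) ^+ 2.
Proof. nra. Qed.

Lemma fin_small (d P Q X : R) : 1 <= X -> X <= d * P * Q -> 1 <= d * (2 * P * Q).
Proof.
move=> h1 h2; have -> : d * (2 * P * Q) = 2 * (d * P * Q) by ring.
move: h2; set Y := d * P * Q => h2; lra.
Qed.

Lemma fin_large (d P Q a g1 g2 : R) : 0 < P -> 1 <= Q -> 0 <= d ->
  1 <= a * P -> P * a <= P * (d + g1 + g2) -> 4 * P * g1 <= 1 ->
  4 * P * g2 <= 1 -> 1 <= d * (2 * P * Q).
Proof.
move=> hP hQ hd h1 h2 h3 h4.
have e1 : P * (d + g1 + g2) = P * d + P * g1 + P * g2 by ring.
have e2 : 4 * P * g1 = 4 * (P * g1) by ring.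
have e3 : 4 * P * g2 = 4 * (P * g2) by ring.
rewrite e1 in h2; rewrite e2 in h3; rewrite e3 in h4; rewrite mulrC in h1.
have h5 : 1 / 2 <= P * d.
  move: h1 h2 h3 h4; set X := P * a; set Y := P * d; set U := P * g1; set V := P * g2.
  lra.
have h6 : P * d <= P * d * Q by rewrite ler_peMr // mulr_ge0 // ltW.
have -> : d * (2 * P * Q) = 2 * (P * d * Q) by ring.
move: h5 h6; set Y := P * d; set Z := Y * Q; lra.
Qed.

End Aux.

Theorem lemmaC7 (R : realType) (nu : nat) (jb : 'I_nu -> int)
  (jb_pos : forall i, 0 < jb i) (jb_inj : injective jb) :
  exists C : R, 0 < C /\
    forall (j j' : int) (l : 'I_nu -> int),
      inSc jb j -> inSc jb j' -> j != j' ->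
      0 < l1norm l <= 2 ->
      \sum_i jb i * l i + j - j' = 0 ->
      delta R jb l j j' != 0 ->
      C <= `|delta R jb l j j'|.
Proof.
set P := \prod_i (1 + (jb i)%:~R ^+ 2) : R.
set B := \sum_i (jb i)%:~R : R.
have Ppos : 0 < P by apply: prodr_gt0 => i _; exact: den_pos.
have B0 : 0 <= B by apply: sumr_ge0 => i _; rewrite ler0z ltW.
set K := 12 * P + 2 * B.
set Q := (1 + K ^+ 2) ^+ 2.
have Q1 : 1 <= Q.
  have := sqr_ge0 K => hK; rewrite /Q; nra.
exists (1 / (2 * P * Q)); split.
  by apply: divr_gt0 => //; apply: mulr_gt0; [apply: mulr_gt0|lra].
move=> j j' l _ _ _ hl hmom hd.
have hA := @A_nz R nu jb l jb_pos jb_inj hl.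
have hAi := A_int R nu jb l.
have hA1 := norm_intr_ge1 hAi (mulf_neq0 hA (negbT (gt_eqF Ppos))).
rewrite normrM (gtr0_norm Ppos) in hA1.
have hm : \sum_i (jb i)%:~R * (l i)%:~R + (j%:~R : R) - j'%:~R = 0.
  have := congr1 (fun z : int => z%:~R : R) hmom.
  rewrite /= rmorphB rmorphD rmorph_sum /=.
  by under eq_bigr do rewrite intrM.
have hdelta : delta R jb l j j' = A R jb l + G R j - G R j'.
  rewrite /delta !lamE.
  have -> : \sum_i lam R (jb i) * (l i)%:~R
      = \sum_i (jb i)%:~R * (l i)%:~R + A R jb l.
    by rewrite /A -big_split; apply: eq_bigr => i _; rewrite lamE mulrDl.
  lra.
rewrite hdelta in hd *.
set d := `|A R jb l + G R j - G R j'|.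
have d0 : 0 <= d by exact: normr_ge0.
have hli : forall i, `|(l i)%:~R| <= 2 :> R.
  move=> i; rewrite -intr_norm.
  have : `|l i| <= 2.
    apply: le_trans (@ge0_le_sum nu (fun k => `|l k|) i _) _ => //.
    by case/andP: hl.
  by rewrite -(ler_int R).
have hjj : `|(j%:~R : R) - j'%:~R| <= 2 * B.
  have -> : (j%:~R : R) - j'%:~R = - \sum_i (jb i)%:~R * (l i)%:~R by lra.
  rewrite normrN; apply: le_trans (ler_norm_sum _ _ _) _.
  rewrite /B mulr_sumr; apply: ler_sum => i _.
  rewrite normrM (gtr0_norm (_ : 0 < (jb i)%:~R)) ?ltr0z // mulrC.
  by rewrite ler_pM2r ?ltr0z ?hli.
have tri : `|(j'%:~R : R)| <= `|(j%:~R : R)| + 2 * B /\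
           `|(j%:~R : R)| <= `|(j'%:~R : R)| + 2 * B.
  have t1 := ler_normD ((j'%:~R : R) - j%:~R) (j%:~R).
  have t2 := ler_normD ((j%:~R : R) - j'%:~R) (j'%:~R).
  rewrite subrK in t1; rewrite subrK in t2.
  rewrite distrC in t1. lra.
rewrite ler_pdivrMr; last by apply: mulr_gt0; [apply: mulr_gt0|lra].
have dPQ : 0 <= P * d * (Q - 1) by apply: mulr_ge0; [apply: mulr_ge0; lra|lra].
have small : `|(j%:~R : R)| <= K -> `|(j'%:~R : R)| <= K -> 1 <= d * (2 * P * Q).
  move=> hjK hjK'.
  have iN : (A R jb l + G R j - G R j') *
            (P * (1 + (j%:~R : R) ^+ 2) * (1 + (j'%:~R : R) ^+ 2)) \is a Num.int.
    have -> : (A R jb l + G R j - G R j') *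
            (P * (1 + (j%:~R : R) ^+ 2) * (1 + (j'%:~R : R) ^+ 2)) =
         (A R jb l * P) * ((1 + (j%:~R : R) ^+ 2) * (1 + (j'%:~R : R) ^+ 2))
         + (G R j * (1 + (j%:~R : R) ^+ 2)) * (P * (1 + (j'%:~R : R) ^+ 2))
         - (G R j' * (1 + (j'%:~R : R) ^+ 2)) * (P * (1 + (j%:~R : R) ^+ 2))
         by ring.
      have PI : P \is a Num.int by apply: rpred_prod => k _; exact: den_int.
      apply: rpredB; first apply: rpredD.
      - by apply: rpredM => //; apply: rpredM; exact: den_int.
      - by apply: rpredM; [exact: GD_int | apply: rpredM => //; exact: den_int].
      - by apply: rpredM; [exact: GD_int | apply: rpredM => //; exact: den_int].
  have n1 := norm_intr_ge1 iN (mulf_neq0 hd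
         (mulf_neq0 (mulf_neq0 (negbT (gt_eqF Ppos)) (negbT (gt_eqF (den_pos R j)))) (negbT (gt_eqF (den_pos R j'))))).
  rewrite normrM -/d in n1.
  rewrite (gtr0_norm (_ : 0 < P * (1 + (j%:~R : R) ^+ 2) * (1 + (j'%:~R : R) ^+ 2)))
         in n1; last by rewrite !mulr_gt0 ?den_pos.
  have DD : (1 + (j%:~R : R) ^+ 2) * (1 + (j'%:~R : R) ^+ 2) <= Q
         by apply: DD_le; rewrite ?sqr_ge0 // sq_le.
  have : d * P * ((1 + (j%:~R : R) ^+ 2) * (1 + (j'%:~R : R) ^+ 2)) <= d * P * Q
         by rewrite ler_wpM2l // mulr_ge0 // ltW.
  move=> hh.
  have e : d * (P * (1 + (j%:~R : R) ^+ 2) * (1 + (j'%:~R : R) ^+ 2)) = d * P * ((1 + (j%:~R : R) ^+ 2) * (1 + (j'%:~R : R) ^+ 2)) by ring.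
  rewrite e in n1; exact: (@fin_small R _ _ _ _ n1 hh).
case: (lerP (12 * P) `|(j%:~R : R)|) => hj1;
  case: (lerP (12 * P) `|(j'%:~R : R)|) => hj2.
-
  have g1 := @Gbound R j P Ppos hj1.
  have g2 := @Gbound R j' P Ppos hj2.
  have t : `|A R jb l| <= d + `|G R j| + `|G R j'|.
    have -> : A R jb l = (A R jb l + G R j - G R j') + (- G R j) + G R j' by ring.
    apply: le_trans (ler_normD _ _) _; rewrite lerD2r.
    by apply: le_trans (ler_normD _ _) _; rewrite normrN.
  have t' : P * `|A R jb l| <= P * (d + `|G R j| + `|G R j'|) by rewrite ler_pM2l.
  lra.
all: by apply: small; rewrite /K; lra.
Qed.
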